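(* Let $F_n:\mathcal{Y}\to[-\infty,0]$, $n\in\mathbb{N}$, satisfy the separated subadditivity condition (S). Then for every $k\in\mathbb{N}$, every integer $\ell>\ell_0$ and every $y\in\mathcal{Y}$, $$\limsup_{n\to\infty}\frac{F_{(n-1)\ell+nk}(y)}{n}\ge\alpha(\ell)(k+\ell)\limsup_{n\to\infty}\frac{F_n(y)}{n}.$$
   Context: Discrete time: $\Psi:\mathcal{Y}\to\mathcal{Y}$ measurable. Condition (S): there exist $\ell_0\ge0$ and a non-increasing $\alpha:[\ell_0,\infty)\to[1,\infty)$ with $\lim_{\ell\to\infty}\alpha(\ell)=1$ such that for all $n\ge1$, all $t_1,\dots,t_n\in\mathbb{N}$, all integers $\ell>\ell_0$ and all $y$, $$F_{(n-1)\ell+\sum_{k=1}^nt_k}(y)\le\frac{1}{\alpha(\ell)}\sum_{k=1}^nF_{t_k}\big(\Psi^{(k-1)\ell+\sum_{j=1}^{k-1}t_j}y\big).$$ *)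

(* Defs.v *)
From HB Require Import structures.
From mathcomp Require Import all_boot all_order all_algebra.
From mathcomp Require Import all_classical all_reals all_analysis.
Set Implicit Arguments. Unset Strict Implicit. Unset Printing Implicit Defensive.
Import Order.TTheory GRing.Theory Num.Theory numFieldNormedType.Exports.
Local Open Scope classical_set_scope.

Local Open Scope ring_scope.
Local Open Scope ereal_scope.

Definition admissible_alpha (R : realType) (l0 : R) (alpha : R -> R) : Prop :=
  (0 <= l0)%R /\
  (forall x : R, (l0 <= x)%R -> (1 <= alpha x)%R) /\
  (forall x y : R, (l0 <= x)%R -> (x <= y)%R -> (alpha y <= alpha x)%R) /\
  (alpha @ +oo%R --> (1 : R)%R).

(* Separated subadditivity condition (S) for F : nat -> Y -> \bar R, with the
   given l0 and alpha.  The tuple t_1..t_n is encoded as t : nat -> nat, of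
   which t 0, ..., t (n-1) are used (0-indexed). *)
Definition cond_S (R : realType) (Y : Type) (Psi : Y -> Y)
    (F : nat -> Y -> \bar R) (l0 : R) (alpha : R -> R) : Prop :=
  forall (n : nat) (t : nat -> nat) (l : nat) (y : Y),
    (1 <= n)%N -> (l0 < l%:R)%R ->
    F ((n - 1) * l + \sum_(k < n) t k)%N y
    <= ((alpha l%:R)^-1)%:E *
       \sum_(k < n) F (t k) (iter (k * l + \sum_(j < k) t j)%N Psi y).

(* Main.v *)
Require Import Defs.
From HB Require Import structures.
From mathcomp Require Import all_boot all_order all_algebra.
From mathcomp Require Import all_classical all_reals all_analysis.
From mathcomp Require Import ring lra zify.
Import Order.TTheory GRing.Theory Num.Theory.
Local Open Scope ring_scope.
Local Open Scope ereal_scope.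
Lemma nonpos_scale (R : realType) (x : \bar R) (p q : R) :
  (0 <= p)%R -> (p <= q)%R -> x <= 0 -> q%:E * x <= p%:E * x.
Proof.
move=> p0 pq; case: x => [r| |] r0.
- rewrite -!EFinM lee_fin; rewrite lee_fin in r0. exact: ler_wnM2r.
- move: r0. rewrite leye_eq. move=> r0. by [].  
- rewrite (mulrNy q) (mulrNy p); have [q0|q0] := eqVneq q (0%:R : R).
    subst q; by have /eqP -> : p == (0%:R : R) by rewrite eq_le pq p0.
  have qp : (0 < q)%R by rewrite lt_neqAle eq_sym q0 (le_trans p0 pq).
  by rewrite gtr0_sg // mul1e leNye.
Qed.
Lemma S2 (R : realType) (Y : Type) (Psi : Y -> Y) (F : nat -> Y -> \bar R)
  (l0 : R) (alpha : R -> R) :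
  (forall n y, F n y <= 0) -> cond_S Psi F l0 alpha ->
  forall (a l m : nat) y, (l0 < l%:R)%R -> (0 < alpha l%:R)%R -> (a + l <= m)%N ->
  (alpha l%:R)%:E * F m y <= F a y.
Proof.
move=> Fle0 HS a l m y Hl a0 alm.
have := HS 2%N (fun i => if i == 0%N then a else (m - (a + l))%N) l y isT Hl.
rewrite !big_ord_recr !big_ord0 /=.
move=> H; move: H.
have -> : ((2 - 1) * l + (0 + a + (m - (a + l))))%N = m by lia.
rewrite add0e => H.
rewrite -lee_pdivlMl //; apply: (le_trans H); apply: lee_wpmul2l.
  by rewrite lee_fin invr_ge0 ltW.
exact: geeDl.
Qed.

Theorem lemmaD2 (R : realType) (d : measure_display) (Y : measurableType d)
    (Psi : Y -> Y) (F : nat -> Y -> \bar R) (l0 : R) (alpha : R -> R) :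
  measurable_fun setT Psi ->
  (forall n y, F n y <= 0) ->
  admissible_alpha l0 alpha ->
  cond_S Psi F l0 alpha ->
  forall (k l : nat) (y : Y), (l0 < l%:R)%R ->
    limn_esup (fun n : nat => F ((n - 1) * l + n * k)%N y * (n%:R^-1)%:E)
    >= ((alpha l%:R) * (k + l)%:R)%:E
       * limn_esup (fun n : nat => F n y * (n%:R^-1)%:E).
Proof.
move=> _ Fle0 [l00 [a1 _]] HS k l y Hl.
set c := alpha l%:R.
have c1 : (1 <= c)%R by apply: a1; exact: ltW.
have c0 : (0 < c)%R by apply: lt_le_trans c1.
have l1 : (0 < l)%N.
  have : (0 < l%:R :> R)%R by apply: le_lt_trans Hl.
  by rewrite ltr0n.
set p := (k + l)%N.
have p1 : (0 < p)%N by rewrite /p; lia.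
have p0 : (0 < p%:R :> R)%R by rewrite ltr0n.
set a := (fun n : nat => F n y * (n%:R^-1)%:E).
set b := (fun n : nat => F ((n - 1) * l + n * k)%N y * (n%:R^-1)%:E).
have infE u : limn_esup u = ereal_inf (range (esups u)).
  by rewrite limn_esup_lim; apply/cvg_lim => //; exact: cvg_esups_inf.
set L := limn_esup a; set X := limn_esup b.
have key : forall (eps : R) (n0 m : nat), (0 < eps)%R -> (1 <= n0)%N ->
    (1 <= n0%:R * eps)%R -> (n0 <= (m %/ p)%N)%N ->
    (c * p%:R * (1 + eps))%:E * a m <= b (m %/ p)%N.
  move=> eps n0 m eps0 n01 n0e n0n.
  set n := (m %/ p)%N.
  have np : (n * p <= m)%N by apply: leq_trunc_div.
  have mp : (m < n.+1 * p)%N by apply: ltn_ceil.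
  have n1 : (1 <= n)%N by apply: leq_trans n0n.
  have m1 : (1 <= m)%N by apply: leq_trans np; rewrite muln_gt0 n1.
  have Hs : c%:E * F m y <= F ((n - 1) * l + n * k)%N y.
    apply: (@S2 _ _ _ _ _ _ Fle0 HS) => //.
    have E : ((n - 1) * l + n * k + l)%N = (n * p)%N.
      have := leq_pmull l n1; rewrite /p mulnDr mulnBl mul1n; lia.
    by rewrite E.
  rewrite /a /b -/n.
  have n0' : (0 < n%:R :> R)%R by rewrite ltr0n.
  have m0' : (0 < m%:R :> R)%R by rewrite ltr0n.
  apply: (@le_trans _ _ ((c / n%:R)%:E * F m y)).
    rewrite muleC -muleA -EFinM muleC (mulrC (m%:R^-1)%R); apply: nonpos_scale => //.
      by rewrite divr_ge0 // ltW.
    have ne : (1 <= n%:R * eps)%R.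
      apply: le_trans n0e _; apply: ler_wpM2r; first exact: ltW.
      by rewrite ler_nat.
    have mR : (m%:R <= p%:R * n%:R * (1 + eps) :> R)%R.
      have H : (m%:R + 1 <= (n%:R + 1) * p%:R :> R)%R.
        by rewrite !natr1 -natrM ler_nat.
      nra.
    rewrite ler_pdivrMr //.
    have -> : (c * p%:R * (1 + eps) / m%:R * n%:R = (c * (p%:R * n%:R * (1 + eps))) / m%:R)%R by ring.
    rewrite ler_pdivlMr //; apply: ler_wpM2l; [exact: ltW | exact: mR].
  rewrite muleC EFinM muleA; apply: lee_wpmul2r.
    by rewrite lee_fin invr_ge0 ltW.
  by rewrite muleC.
have claim : forall eps : R, (0 < eps)%R -> (c * p%:R * (1 + eps))%:E * L <= X.
  move=> eps eps0.
  set n0 := (Num.trunc (eps^-1)).+1.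
  have n01 : (1 <= n0)%N by [].
  have n0e : (1 <= n0%:R * eps)%R.
    have := truncnS_gt (eps^-1); rewrite -/n0 => H.
    by rewrite -ler_pdivrMr // mul1r ltW.
  set e := (c * p%:R * (1 + eps))%R.
  have e0 : (0 < e)%R by rewrite /e !mulr_gt0 // ltr_pwDr.
  rewrite /X infE; apply: le_ereal_inf_tmp => _ [N _ <-].
  rewrite -lee_pdivlMl //.
  apply: (@le_trans _ _ (esups a (maxn N n0 * p)%N)).
    rewrite /L infE; apply: ereal_inf_lbound; by exists (maxn N n0 * p)%N.
  apply: ge_ereal_sup => _ [m /= Mm <-].
  have Hn : (maxn N n0 <= (m %/ p)%N)%N.
    by have := leq_div2r p Mm; rewrite mulnK.
  have Hk := key eps n0 m eps0 n01 n0e (leq_trans (leq_maxr _ _) Hn).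
  rewrite lee_pdivlMl //; apply: le_trans Hk _.
  apply: ereal_sup_ubound; exists (m %/ p)%N => //=.
  exact: leq_trans (leq_maxl _ _) Hn.
have cp0 : (0 < c * p%:R)%R by rewrite mulr_gt0.
rewrite /= -/a -/b -/L -/X -/p -/c.
case EL : L => [r| |].
- case EX : X => [x| |]; last 2 first.
  + by rewrite leey.
  + by have := claim 1%R ltr01; rewrite EL EX -EFinM leeNy_eq => /eqP [].
  have Hc := claim; rewrite EL EX in Hc.
  rewrite -EFinM lee_fin.
  have [r0|r0] := leP 0%R r.
    have := Hc 1%R ltr01; rewrite -EFinM lee_fin; apply: le_trans.
    by apply: ler_wpM2r => //; rewrite ler_pMr // lerDl.
  apply/ler_addgt0Pr => del del0.
  have cr : (0 < c * p%:R * - r)%R by rewrite mulr_gt0 // oppr_gt0.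
  have := Hc (del / (c * p%:R * - r))%R (divr_gt0 del0 cr).
  rewrite -EFinM lee_fin => H.
  rewrite -lerBlDr; apply: le_trans H.
  rewrite mulrDr mulr1 mulrDl; apply: lerD => //.
  rewrite le_eqVlt; apply/orP; left; apply/eqP.
  by field; rewrite (lt0r_neq0 p0) (lt0r_neq0 c0) ltr0_neq0.
- have := claim 1%R ltr01; rewrite EL; apply: le_trans.
  by rewrite (mulry (c * p%:R)) (mulry (c * p%:R * (1 + 1))) !gtr0_sg // mulr_gt0 // ltr_pwDr.
- by rewrite mulrNy gtr0_sg // mul1e leNye.
Qed.
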